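(* Let $(a(n))_{n\in\mathbb N_0}$ be a real sequence and for $\lambda>0$ let $N_\lambda$ be Poisson distributed with mean $\lambda$. If $a(n+1)-a(n)=O(\sqrt n)$ as $n\to\infty$, then $|a(n)-\mathbb E[a(N_n)]|=O(n)$ as $n\to\infty$. *)

(* Defs.v *)
From Stdlib Require Import Reals.
From Coquelicot Require Import Coquelicot.
Open Scope R_scope.

Definition poisson_pmf (lam : R) (k : nat) : R :=
  exp (- lam) * lam ^ k / INR (Factorial.fact k).

Definition poisson_terms (a : nat -> R) (lam : R) (k : nat) : R :=
  a k * poisson_pmf lam k.

Definition poisson_expect (a : nat -> R) (lam : R) : R :=
  Series (poisson_terms a lam).

(* Main.v *)
Require Import Defs.
From Stdlib Require Import Reals Lra Lia.
From Coquelicot Require Import Coquelicot.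
Open Scope R_scope.

Lemma exp_ser (x : R) : is_series (fun k => x ^ k / INR (Factorial.fact k)) (exp x).
Proof.
  generalize (is_exp_Reals x); unfold is_pseries.
  apply is_series_ext. intros k. unfold scal; simpl. unfold mult; simpl. rewrite pow_n_pow. unfold Rdiv. ring.
Qed.

Lemma P0 (l : R) : is_series (poisson_pmf l) 1.
Proof.
  replace 1 with (scal (exp (- l)) (exp l)).
  2:{ unfold scal; simpl; unfold mult; simpl. rewrite <- exp_plus. replace (-l + l) with 0 by ring. apply exp_0. }
  pose proof (is_series_scal (exp (-l)) _ _ (exp_ser l)) as H.
  eapply is_series_ext; [| exact H].
  intros k. unfold scal; simpl; unfold mult; simpl. unfold poisson_pmf, Rdiv. ring.
Qed.

Lemma pmf_S (l : R) (k : nat) : INR (S k) * poisson_pmf l (S k) = l * poisson_pmf l k.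
Proof.
  unfold poisson_pmf. change (Factorial.fact (S k)) with (S k * Factorial.fact k)%nat; rewrite mult_INR. simpl pow.
  assert (H1 := INR_fact_neq_0 k). assert (H2 : INR (S k) <> 0) by (apply not_0_INR; lia).
  field. auto.
Qed.

Lemma P1 (l : R) : is_series (fun k => INR k * poisson_pmf l k) l.
Proof.
  apply is_series_decr_1. simpl INR at 2.
  match goal with |- is_series _ ?v => replace v with (scal l 1) end.
  2:{ unfold scal, plus, opp; simpl; unfold mult; simpl. unfold plus, opp; simpl. ring. }
  pose proof (is_series_scal l _ _ (P0 l)) as H.
  eapply is_series_ext; [| exact H].
  intros k. rewrite pmf_S. reflexivity.
Qed.

Lemma P2 (l : R) : is_series (fun k => INR k * INR k * poisson_pmf l k) (l * l + l).
Proof.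
  apply is_series_decr_1. simpl INR at 3.
  match goal with |- is_series _ ?v => replace v with (scal l (plus l 1)) end.
  2:{ unfold scal, plus, opp; simpl; unfold mult; simpl. unfold plus, opp; simpl. ring. }
  pose proof (is_series_scal l _ _ (is_series_plus _ _ _ _ (P1 l) (P0 l))) as H.
  eapply is_series_ext; [| exact H].
  intros k. cbv beta. rewrite Rmult_assoc, pmf_S, S_INR.
  unfold scal, plus; simpl; unfold mult, plus; simpl. ring.
Qed.

Lemma Pquad (l al be ga : R) :
  is_series (fun k => (al + be * INR k + ga * (INR k * INR k)) * poisson_pmf l k)
            (al + be * l + ga * (l * l + l)).
Proof.
  pose proof (is_series_plus _ _ _ _ (is_series_plus _ _ _ _
     (is_series_scal al _ _ (P0 l)) (is_series_scal be _ _ (P1 l)))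
     (is_series_scal ga _ _ (P2 l))) as H.
  unfold scal, plus in H; simpl in H; unfold mult, plus in H; simpl in H.
  replace (al + be * l + ga * (l * l + l)) with (al * 1 + be * l + ga * (l * l + l)) by ring.
  eapply is_series_ext; [| exact H]. intros k; simpl; ring.
Qed.

Lemma finite_bound (a : nat -> R) (N : nat) :
  exists Sb, 0 <= Sb /\ forall m, (m < N)%nat -> Rabs (a (S m) - a m) <= Sb.
Proof.
  induction N as [|N [Sb [HS IH]]].
  - exists 0. split; [lra|]. intros m Hm; lia.
  - exists (Sb + Rabs (a (Datatypes.S N) - a N)). split.
    + pose proof (Rabs_pos (a (Datatypes.S N) - a N)); lra.
    + intros m Hm. destruct (Nat.eq_dec m N) as [->|Hne].
      * pose proof HS; lra.
      * pose proof (IH m ltac:(lia)). pose proof (Rabs_pos (a (Datatypes.S N) - a N)); lra.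
Qed.

Lemma B1 (a : nat -> R)
  (Ha : exists (C : R) (N0 : nat), forall n : nat, (N0 <= n)%nat ->
          Rabs (a (S n) - a n) <= C * sqrt (INR n)) :
  exists D, 0 <= D /\ forall m, Rabs (a (S m) - a m) <= D * sqrt (INR (S m)).
Proof.
  destruct Ha as [C [N0 HC]]. destruct (finite_bound a N0) as [Sb [HS HB]].
  exists (Rabs C + Sb). split; [pose proof (Rabs_pos C); lra|].
  intros m.
  assert (H1 : 1 <= sqrt (INR (Datatypes.S m))).
  { rewrite <- sqrt_1. apply sqrt_le_1_alt. rewrite S_INR. pose proof (pos_INR m); lra. }
  assert (H2 : sqrt (INR m) <= sqrt (INR (Datatypes.S m))).
  { apply sqrt_le_1_alt. rewrite S_INR. lra. }
  pose proof (sqrt_pos (INR m)). pose proof (Rabs_pos C).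
  destruct (Nat.lt_ge_cases m N0) as [Hl|Hg].
  - pose proof (HB m Hl). nra.
  - pose proof (HC m Hg). pose proof (Rle_abs C). nra.
Qed.

Lemma B2 (a : nat -> R) (D : R) (HD : 0 <= D)
  (H : forall m, Rabs (a (S m) - a m) <= D * sqrt (INR (S m))) :
  forall k d, Rabs (a (k + d)%nat - a k) <= D * INR d * sqrt (INR (k + d)).
Proof.
  intros k d. induction d as [|d IH].
  - rewrite Nat.add_0_r. replace (a k - a k) with 0 by ring. rewrite Rabs_R0. simpl. lra.
  - rewrite Nat.add_succ_r.
    assert (Hm : sqrt (INR (k + d)) <= sqrt (INR (S (k + d)))).
    { apply sqrt_le_1_alt. rewrite S_INR. lra. }
    pose proof (H (k + d)%nat).
    pose proof (Rabs_triang (a (S (k + d)) - a (k + d)%nat) (a (k + d)%nat - a k)).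
    replace (a (S (k + d)) - a (k + d)%nat + (a (k + d)%nat - a k)) with (a (S (k+d)) - a k) in * by ring.
    rewrite (S_INR d). pose proof (pos_INR d). pose proof (sqrt_pos (INR (k + d))).
    assert (0 <= D * INR d) by (apply Rmult_le_pos; lra).
    assert (D * INR d * sqrt (INR (k + d)) <= D * INR d * sqrt (INR (S (k + d)))) by (apply Rmult_le_compat_l; lra).
    lra.
Qed.

Lemma amgm (x y : R) : 0 <= x -> 0 <= y -> x * sqrt y <= x * x + y.
Proof.
  intros Hx Hy. pose proof (sqrt_sqrt y Hy). pose proof (sqrt_pos y). nra.
Qed.

Lemma Bmain (a : nat -> R) (D : R) (HD : 0 <= D)
  (H : forall m, Rabs (a (S m) - a m) <= D * sqrt (INR (S m))) :
  forall n k, Rabs (a n - a k) <= D * ((INR n - INR k) * (INR n - INR k) + INR n + INR k).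
Proof.
  intros n k. pose proof (pos_INR n). pose proof (pos_INR k).
  destruct (Nat.le_ge_cases k n) as [Hkn|Hnk].
  - destruct (Nat.le_exists_sub k n Hkn) as [d [-> _]].
    rewrite Nat.add_comm. pose proof (B2 a D HD H k d). rewrite plus_INR in *.
    pose proof (pos_INR d). pose proof (amgm (INR d) (INR k + INR d)).
    assert (INR d * sqrt (INR k + INR d) <= INR d * INR d + (INR k + INR d)) by (apply amgm; lra).
    nra.
  - destruct (Nat.le_exists_sub n k Hnk) as [d [-> _]].
    rewrite Nat.add_comm. pose proof (B2 a D HD H n d). rewrite Rabs_minus_sym. rewrite plus_INR in *.
    pose proof (pos_INR d).
    assert (INR d * sqrt (INR n + INR d) <= INR d * INR d + (INR n + INR d)) by (apply amgm; lra).
    nra.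
Qed.

Lemma pmf_nonneg (l : R) (k : nat) : 0 <= l -> 0 <= poisson_pmf l k.
Proof.
  intros Hl. unfold poisson_pmf, Rdiv. apply Rmult_le_pos; [apply Rmult_le_pos|].
  - left; apply exp_pos.
  - apply pow_le; lra.
  - left; apply Rinv_0_lt_compat, INR_fact_lt_0.
Qed.

Lemma norm_R (x : R) : norm x = Rabs x.
Proof. reflexivity. Qed.

Lemma part1 (a : nat -> R) (D : R) (HD : 0 <= D)
  (HB : forall n k, Rabs (a n - a k) <= D * ((INR n - INR k) * (INR n - INR k) + INR n + INR k))
  (lam : R) (Hl : 0 <= lam) :
  ex_series (fun k => Rabs (poisson_terms a lam k)).
Proof.
  apply (ex_series_le (K:=R_AbsRing) (V:=R_CompleteNormedModule) _ (fun k => (Rabs (a 0%nat) + D * INR k + D * (INR k * INR k)) * poisson_pmf lam k)).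
  - intros k. rewrite norm_R, Rabs_Rabsolu. unfold poisson_terms.
    pose proof (pmf_nonneg lam k Hl). rewrite Rabs_mult, (Rabs_pos_eq (poisson_pmf lam k)) by lra.
    apply Rmult_le_compat_r; [lra|].
    pose proof (HB 0%nat k). simpl INR in H0.
    pose proof (Rabs_triang (a 0%nat) (a k - a 0%nat)).
    replace (a 0%nat + (a k - a 0%nat)) with (a k) in H1 by ring.
    rewrite Rabs_minus_sym in H0. lra.
  - eexists. apply Pquad.
Qed.

Theorem lemma6p8 (a : nat -> R)
  (Ha : exists (C : R) (N0 : nat), forall n : nat, (N0 <= n)%nat ->
          Rabs (a (S n) - a n) <= C * sqrt (INR n)) :
  (forall lam : R, 0 < lam ->
     ex_series (fun k => Rabs (poisson_terms a lam k))) /\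
  exists (C : R) (N0 : nat), forall n : nat, (N0 <= n)%nat ->
    Rabs (a n - poisson_expect a (INR n)) <= C * INR n.
Proof.
  destruct (B1 a Ha) as [D [HD H]].
  pose proof (Bmain a D HD H) as HB.
  split.
  - intros lam Hl. apply (part1 a D HD HB). lra.
  - exists (3 * D), 0%nat. intros n _.
    set (l := INR n).
    assert (Hl : 0 <= l) by apply pos_INR.
    assert (ex1 : ex_series (poisson_terms a l)) by (apply ex_series_Rabs, (part1 a D HD HB); lra).
    assert (Hf : is_series (fun k => (a n - a k) * poisson_pmf l k) (a n - poisson_expect a l)).
    { pose proof (is_series_minus _ _ _ _ (is_series_scal (a n) _ _ (P0 l)) (Series_correct _ ex1)) as Hm.
      match type of Hm with is_series _ ?v => replace v with (a n - poisson_expect a l) in Hm end.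
      2:{ unfold poisson_expect, scal, plus, opp; simpl; unfold mult, plus, opp; simpl. ring. }
      eapply is_series_ext; [| exact Hm]. intros k. unfold poisson_terms, scal, plus, opp; simpl; unfold mult, plus, opp; simpl. ring. }
    set (g := fun k => (D * (l * l + l) + D * (1 - 2 * l) * INR k + D * (INR k * INR k)) * poisson_pmf l k).
    assert (Hg : is_series g (3 * D * l)).
    { replace (3 * D * l) with (D * (l * l + l) + D * (1 - 2 * l) * l + D * (l * l + l)) by ring.
      apply Pquad. }
    assert (Hle : forall k, 0 <= Rabs ((a n - a k) * poisson_pmf l k) <= g k).
    { intros k. split; [apply Rabs_pos|].
      pose proof (pmf_nonneg l k Hl).
      rewrite Rabs_mult, (Rabs_pos_eq (poisson_pmf l k)) by lra. unfold g.
      apply Rmult_le_compat_r; [lra|]. pose proof (HB n k). fold l in H1.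
      replace (D * (l * l + l) + D * (1 - 2 * l) * INR k + D * (INR k * INR k))
        with (D * ((l - INR k) * (l - INR k) + l + INR k)) by ring. lra. }
    assert (exa : ex_series (fun k => Rabs ((a n - a k) * poisson_pmf l k))).
    { apply (ex_series_le (K:=R_AbsRing) (V:=R_CompleteNormedModule) _ g). intros k; rewrite norm_R, Rabs_Rabsolu; apply Hle. eexists; exact Hg. }
    rewrite <- (is_series_unique _ _ Hf).
    eapply Rle_trans; [apply Series_Rabs; exact exa|].
    rewrite <- (is_series_unique _ _ Hg).
    apply Series_le; [exact Hle | eexists; exact Hg].
Qed.
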